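(* Consider the following algorithm (PMI) on training bags $B_1,\dots,B_N$, $B_i=[B_{i1},\dots,B_{iN_i}]$, $B_{ij}\in\mathbb{R}^d$, $n=\sum_iN_i$, with kernel $\ker$ (feature map $\Phi$) and parameter $\nu\in(0,1)$, and with access to an oracle returning the label ($\pm1$) of any queried instance. Repeat: (1) compute $\lambda$ minimizing $\sum_i\|\sum_j\lambda_{ij}\Phi(B_{ij})-\frac1N\sum_k\sum_j\lambda_{kj}\Phi(B_{kj})\|^2$ s.t. $\sum_j\lambda_{ij}=1$, $\lambda_{ij}\ge0$, and set $b_i=\sum_j\lambda_{ij}\Phi(B_{ij})$; (2) solve $\min_\alpha\frac12\sum_{i,j}\alpha_i\alpha_j\ker(b_i,b_j)$ s.t. $0\le\alpha_i\le\frac1{\nu N}$, $\sum_i\alpha_i=1$, giving $\rho$, $l(x)=\sum_j\alpha_j\sum_k\lambda_{jk}\ker(x,B_{jk})-\rho$ and $f(x)=\operatorname{sign}(l(x))$; (3)–(4) if some bag $B_i$ has $\alpha_i<\frac1{\nu N}$ and $\max_j f(B_{ij})=-1$, choose $s_i=\arg\max_j l(B_{ij})$ for every $i$, solve $\min_{\alpha'}\frac12\sum_{p,q}\alpha'_p\alpha'_q\ker(x_p,x_q)$ s.t. $0\le\alpha'_p\le\frac1{2\nu N}$, $\sum_p\alpha'_p=1$ over the $2N$ points $\{b_i\}\cup\{B_{is_i}\}$, and replace $l,f$ by the resulting $l'(x)=\sum_p\alpha'_p\ker(x,x_p)-\rho'$, $f=\operatorname{sign}(l')$; (6) if some bag has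 $f(B_{ij})=1$ for all its instances, stop; (7) query the label of $\arg\max_{i,j}\{l(B_{ij}) : l(B_{ij})\ge0\}$; (8) if it is positive, stop; otherwise remove from all bags every instance $B_{ij}$ with $f(B_{ij})=1$ and repeat from (1) (with $N_i$, $n$ updated). Then: if $\nu<\frac1N$, the maximum number of queried instances is $\min_{i=1,\dots,N}N_i-1$; otherwise the maximum number of queried instances is $\lceil\frac{n}{(1-\nu)N}\rceil-1$.
   Context: $N_i$, $n$ and $N$ in the conclusion refer to the initial training set. $\operatorname{sign}(y)=+1$ if $y\ge0$ and $-1$ otherwise; $\ker(x,y)=\Phi(x)\cdot\Phi(y)$, and kernel values involving virtual instances $b_i$ are expanded linearly, $\ker(b_i,b_j)=\sum_{k,r}\lambda_{ik}\lambda_{jr}\ker(B_{ik},B_{jr})$. $\rho$ is $\sum_i\alpha_i\ker(b_i,b_j)$ for any $j$ with $0<\alpha_j<\frac1{\nu N}$ (analogously $\rho'$). $\lceil x\rceil$ is the least integer not smaller than $x$. *)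

(* Defs.v *)
From HB Require Import structures.
From mathcomp Require Import all_boot all_order all_algebra.
From mathcomp Require Import reals.
Import Order.TTheory GRing.Theory Num.Theory.
Local Open Scope ring_scope.

(* Virtual instances
     b_i = sum_j lambda_ij Phi(B_ij) are genuine vectors of V, so
     ker(b_i, b_j) = dot b_i b_j (the linear expansion of the paper).
   - A current (shrinking) family of bags is  S : 'I_N -> seq X ;
     instance j of bag i is  nth 0 (S i) j  (j < size (S i)).
   - Non-uniquely determined quantities (argmins, argmaxes, the choice of
     j in the definition of rho) are modelled relationally: any admissible
     choice is allowed.  *)

Section PMI.
Variables (R : realType) (V : lmodType R) (dot : V -> V -> R).
Variables (d : nat) (Phi : 'rV[R]_d -> V) (nu : R) (N : nat).

Definition ker (x y : 'rV[R]_d) : R := dot (Phi x) (Phi y).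

Definition sgn (y : R) : int := if 0 <= y then 1%R else (-1)%R.

Definition inst (S : 'I_N -> seq 'rV[R]_d) (i : 'I_N) (j : nat) : 'rV[R]_d :=
  nth 0 (S i) j.

Definition lam_feasible (S : 'I_N -> seq 'rV[R]_d) (lam : 'I_N -> nat -> R) :=
  forall i : 'I_N,
    (forall j, (j < size (S i))%N -> 0 <= lam i j) /\
    \sum_(j < size (S i)) lam i j = 1.

Definition bvec (S : 'I_N -> seq 'rV[R]_d) (lam : 'I_N -> nat -> R) (i : 'I_N) : V :=
  \sum_(j < size (S i)) lam i j *: Phi (inst S i j).

Definition step1_obj (S : 'I_N -> seq 'rV[R]_d) (lam : 'I_N -> nat -> R) : R :=
  \sum_(i < N)
    (let v := bvec S lam i - N%:R^-1 *: \sum_(k < N) bvec S lam k in dot v v).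

Definition is_lambda (S : 'I_N -> seq 'rV[R]_d) (lam : 'I_N -> nat -> R) :=
  lam_feasible S lam /\
  forall lam', lam_feasible S lam' -> step1_obj S lam <= step1_obj S lam'.

Definition qp_feasible {I : finType} (C : R) (a : I -> R) :=
  (forall p, 0 <= a p <= C) /\ \sum_p a p = 1.

Definition qp_obj {I : finType} (pts : I -> V) (a : I -> R) : R :=
  2^-1 * \sum_p \sum_q a p * a q * dot (pts p) (pts q).

Definition is_qp_sol {I : finType} (C : R) (pts : I -> V) (a : I -> R) :=
  qp_feasible C a /\
  forall a', qp_feasible C a' -> qp_obj pts a <= qp_obj pts a'.

Definition is_rho {I : finType} (C : R) (pts : I -> V) (a : I -> R) (rho : R) :=
  exists q, 0 < a q < C /\ rho = \sum_p a p * dot (pts p) (pts q).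

Definition l_step2 (S : 'I_N -> seq 'rV[R]_d) (lam : 'I_N -> nat -> R)
    (alpha : 'I_N -> R) (rho : R) (x : 'rV[R]_d) : R :=
  \sum_(j < N) alpha j * \sum_(k < size (S j)) lam j k * ker x (inst S j k) - rho.

Definition pts2 (S : 'I_N -> seq 'rV[R]_d) (lam : 'I_N -> nat -> R)
    (s : 'I_N -> nat) (p : ('I_N + 'I_N)%type) : V :=
  match p with
  | inl i => bvec S lam i
  | inr i => Phi (inst S i (s i))
  end.

Definition l_step4 (S : 'I_N -> seq 'rV[R]_d) (lam : 'I_N -> nat -> R)
    (s : 'I_N -> nat) (alpha' : ('I_N + 'I_N)%type -> R) (rho' : R)
    (x : 'rV[R]_d) : R :=
  \sum_p alpha' p * dot (Phi x) (pts2 S lam s p) - rho'.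

(* One iteration (1)-(8) from bag family S that reaches step (7), queries
   the instance q, and (if q turns out negative) continues with bag family S'. *)
Definition pmi_iter (S : 'I_N -> seq 'rV[R]_d) (q : 'rV[R]_d)
    (S' : 'I_N -> seq 'rV[R]_d) :=
  exists (lam : 'I_N -> nat -> R) (alpha : 'I_N -> R) (rho : R)
         (lf : 'rV[R]_d -> R),
  is_lambda S lam /\
  is_qp_sol (nu * N%:R)^-1 (bvec S lam) alpha /\
  is_rho (nu * N%:R)^-1 (bvec S lam) alpha rho /\
  (* (3)-(4): lf is the decision function in force after step (4) *)
  (let l := l_step2 S lam alpha rho in
   let cond := exists i : 'I_N, alpha i < (nu * N%:R)^-1 /\
                 (forall j, (j < size (S i))%N -> sgn (l (inst S i j)) = (-1)%R) in
   (cond ->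
      exists (s : 'I_N -> nat) (alpha' : ('I_N + 'I_N)%type -> R) (rho' : R),
        (forall i, (s i < size (S i))%N /\
           forall j, (j < size (S i))%N -> l (inst S i j) <= l (inst S i (s i))) /\
        is_qp_sol (2 * nu * N%:R)^-1 (pts2 S lam s) alpha' /\
        is_rho (2 * nu * N%:R)^-1 (pts2 S lam s) alpha' rho' /\
        forall x, lf x = l_step4 S lam s alpha' rho' x) /\
   (~ cond -> forall x, lf x = l x)) /\
  ~ (exists i : 'I_N, forall j, (j < size (S i))%N -> sgn (lf (inst S i j)) = 1%R) /\
  (exists (i : 'I_N) j, (j < size (S i))%N /\ q = inst S i j /\ 0 <= lf q /\
     forall (i' : 'I_N) j', (j' < size (S i'))%N -> 0 <= lf (inst S i' j') ->
       lf (inst S i' j') <= lf q) /\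
  (forall i, S' i = [seq x <- S i | sgn (lf x) != 1%R]).

(* The algorithm, run on the bags B with oracle [label], queries (at least)
   m instances: m successive iterations each reach step (7); all but the
   last queried instance are labelled negative by the oracle. *)
Definition pmi_queries (label : 'rV[R]_d -> bool)
    (B : 'I_N -> seq 'rV[R]_d) (m : nat) :=
  exists (Ss : nat -> 'I_N -> seq 'rV[R]_d) (qs : nat -> 'rV[R]_d),
    (forall i, Ss 0%N i = B i) /\
    forall t, (t < m)%N ->
      pmi_iter (Ss t) (qs t) (Ss t.+1) /\
      ((t.+1 < m)%N -> label (qs t) = false).

End PMI.

Definition total_size (R : realType) (d N : nat) (B : 'I_N -> seq 'rV[R]_d) : nat :=
  (\sum_(i < N) size (B i))%N.

(* min_i N_i  (for N >= 1; the neutral element total_size B is >= every N_i) *)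
Definition min_size (R : realType) (d N : nat) (B : 'I_N -> seq 'rV[R]_d) : nat :=
  \big[minn/ total_size R d N B]_(i < N) size (B i).

Arguments pmi_queries {R V} dot {d} Phi nu {N} label B m.
Arguments total_size {R d N} B.
Arguments min_size {R d N} B.

(* Main.v *)
Require Import Defs.
From HB Require Import structures.
From mathcomp Require Import all_boot all_order all_algebra.
From mathcomp Require Import reals.
From mathcomp Require Import lra ring zify.
Import Order.TTheory GRing.Theory Num.Theory.
Local Open Scope ring_scope.

Section Dot.
Variables (R : realType) (V : lmodType R) (dot : V -> V -> R).
Variable dot_sym : forall u v, dot u v = dot v u.
Variable dot_lin : forall (a : R) u v w, dot (a *: u + v) w = a * dot u w + dot v w.

Lemma dot0l w : dot 0 w = 0.
Proof. have := dot_lin 1 0 0 w; rewrite scaler0 addr0 mul1r => H; lra. Qed.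
Lemma dotDl u v w : dot (u + v) w = dot u w + dot v w.
Proof. by rewrite -[u in LHS]scale1r dot_lin mul1r. Qed.
Lemma dotZl a u w : dot (a *: u) w = a * dot u w.
Proof. by rewrite -[a *: u]addr0 dot_lin dot0l addr0. Qed.
Lemma dotNl u w : dot (- u) w = - dot u w.
Proof. by rewrite -scaleN1r dotZl mulN1r. Qed.
Lemma dotBl u v w : dot (u - v) w = dot u w - dot v w.
Proof. by rewrite dotDl dotNl. Qed.
Lemma dot_suml I (r : seq I) (P : pred I) (F : I -> V) w :
  dot (\sum_(i <- r | P i) F i) w = \sum_(i <- r | P i) dot (F i) w.
Proof. exact: (big_morph (fun u => dot u w) (fun u v => dotDl u v w) (dot0l w)). Qed.
Lemma dotDr u v w : dot w (u + v) = dot w u + dot w v.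
Proof. by rewrite !(dot_sym w) dotDl. Qed.
Lemma dotZr a u w : dot w (a *: u) = a * dot w u.
Proof. by rewrite !(dot_sym w) dotZl. Qed.
Lemma dotBr u v w : dot w (u - v) = dot w u - dot w v.
Proof. by rewrite !(dot_sym w) dotBl. Qed.
Lemma dot_sumr I (r : seq I) (P : pred I) (F : I -> V) w :
  dot w (\sum_(i <- r | P i) F i) = \sum_(i <- r | P i) dot w (F i).
Proof. rewrite dot_sym dot_suml; apply: eq_bigr => i _; exact: dot_sym. Qed.

Definition Wv {I : finType} (pts : I -> V) (a : I -> R) := \sum_p a p *: pts p.

Lemma qp_objE {I : finType} (pts : I -> V) a :
  qp_obj R V dot pts a = 2^-1 * dot (Wv pts a) (Wv pts a).
Proof.
rewrite /qp_obj /Wv dot_suml; congr (_ * _); apply: eq_bigr => p _.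
rewrite dotZl dot_sumr mulr_sumr; apply: eq_bigr => q _.
by rewrite dotZr mulrA.
Qed.

Lemma gE {I : finType} (pts : I -> V) a q :
  \sum_p a p * dot (pts p) (pts q) = dot (Wv pts a) (pts q).
Proof. by rewrite /Wv dot_suml; apply: eq_bigr => p _; rewrite dotZl. Qed.

Lemma sum_indZ {I : finType} (i : I) (F : I -> V) :
  \sum_p ((p == i)%:R : R) *: F p = F i.
Proof.
rewrite (bigD1 i) //= eqxx scale1r big1 ?addr0 // => p /negbTE ->.
by rewrite scale0r.
Qed.
Lemma sum_ind {I : finType} (i : I) :
  \sum_p ((p == i)%:R : R) = 1.
Proof.
rewrite (bigD1 i) //= eqxx big1 ?addr0 // => p /negbTE ->. by [].
Qed.

Lemma sqexp w x (e : R) :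
  dot (w + e *: x) (w + e *: x) = dot w w + 2 * e * dot w x + e * e * dot x x.
Proof.
rewrite !(dotDl, dotDr, dotZl, dotZr) (dot_sym x w); ring.
Qed.

Lemma kkt {I : finType} (C : R) (pts : I -> V) a q i :
  (forall v, 0 <= dot v v) ->
  is_qp_sol R V dot C pts a -> 0 < a q < C -> a i < C ->
  dot (Wv pts a) (pts q) <= dot (Wv pts a) (pts i).
Proof.
move=> dpos [[Hfe Hsum] Hopt] /andP[aq0 aqC] aiC.
rewrite leNgt; apply/negP => Hlt.
have iq : i != q by apply/eqP => E; move: Hlt; rewrite E ltxx.
set A := dot (Wv pts a) (pts i) - dot (Wv pts a) (pts q).
have A0 : A < 0 by rewrite /A subr_lt0.
set D := pts i - pts q.
set Bq := dot D D.
have B0 : 0 <= Bq := dpos D.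
set e := Num.min (Num.min (C - a i) (a q)) (- A / (Bq + 1)).
have e0 : 0 < e.
  rewrite /e !lt_min subr_gt0 aiC aq0 /=. apply: divr_gt0; lra.
have e1 : e <= C - a i by rewrite /e !ge_min lexx.
have e2 : e <= a q by rewrite /e !ge_min lexx orbT.
have e3 : e * (Bq + 1) <= - A.
  have : e <= - A / (Bq + 1) by rewrite /e ge_min lexx orbT.
  by rewrite ler_pdivlMr; last lra.
pose v p : R := (p == i)%:R - (p == q)%:R.
pose a' p := a p + e * v p.
have Hfe' : qp_feasible R C a'.
  split.
    move=> p; rewrite /a' /v.
    case: (eqVneq p i) => [->|pi].
      rewrite (negbTE iq) /= ?(mulr1n, mulr0n) subr0 mulr1.
      have /andP[h1 h2] := Hfe i; apply/andP; split; lra.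
    case: (eqVneq p q) => [->|pq].
      rewrite /= ?(mulr1n, mulr0n) sub0r mulrN1.
      have /andP[h1 h2] := Hfe q; apply/andP; split; lra.
    rewrite /= ?(mulr1n, mulr0n) subrr mulr0 addr0; exact: Hfe.
  by rewrite /a' big_split /= -mulr_sumr /v sumrB !sum_ind subrr mulr0 addr0.
have HW : Wv pts a' = Wv pts a + e *: D.
  rewrite /Wv /a'.
  under eq_bigr => p _ do rewrite scalerDl -scalerA.
  rewrite big_split /= -scaler_sumr; congr (_ + _ *: _).
  under eq_bigr => p _ do rewrite /v scalerBl.
  by rewrite sumrB !sum_indZ.
have := Hopt _ Hfe'.
rewrite !qp_objE HW.
rewrite sqexp.
have -> : dot (Wv pts a) D = A by rewrite /D dotBr.
rewrite -/Bq => H.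
have H2 : e * (e * Bq) <= e * (- A - e).
  apply: ler_wpM2l; lra.
nra.
Qed.



Section Iter.
Variables (d : nat) (Phi : 'rV[R]_d -> V) (nu : R) (N : nat).

Lemma l2E S lam alpha rho x :
  l_step2 R V dot d Phi N S lam alpha rho x =
  dot (Wv (bvec R V d Phi N S lam) alpha) (Phi x) - rho.
Proof.
rewrite /l_step2 /Wv dot_suml; congr (_ - _); apply: eq_bigr => j _.
rewrite dotZl /bvec dot_suml; congr (_ * _); apply: eq_bigr => k _.
by rewrite dotZl /ker dot_sym.
Qed.

Lemma iter_step S q S' : (forall v, 0 <= dot v v) ->
  pmi_iter R V dot d Phi nu N S q S' ->
  (forall i, (size (S' i) <= size (S i))%N) /\ (forall i, (0 < size (S' i))%N) /\
  exists alpha : 'I_N -> R, qp_feasible R ((nu * N%:R)^-1) alpha /\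
     forall i, alpha i < (nu * N%:R)^-1 -> (size (S' i) < size (S i))%N.
Proof.
move=> dpos [lam [alpha [rho [lf [[Hlf _] [Hqp [Hrho [H34 [H6 [_ H8]]]]]]]]]].
move: H34 => /= [Hc1 Hc2].
set C := (nu * N%:R)^-1 in Hqp Hrho Hc1 Hc2 *.
set lx := l_step2 R V dot d Phi N S lam alpha rho in Hc1 Hc2.
set W := Wv (bvec R V d Phi N S lam) alpha.
have key : forall i, alpha i < C ->
    exists j, (j < size (S i))%N /\ 0 <= lx (inst R d N S i j).
  move=> i aiC.
  case: Hrho => q0 [Hq0 Erho].
  have Hk := @kkt _ _ _ _ q0 i dpos Hqp Hq0 aiC.
  rewrite gE -/W in Erho.
  have [lam0 lam1] := Hlf i.
  have Hsum : \sum_(j < size (S i)) lam i j * lx (inst R d N S i j) = dot W (bvec R V d Phi N S lam i) - rho.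
    under eq_bigr => j _ do rewrite /lx l2E -/W mulrBr.
    rewrite sumrB -mulr_suml lam1 mul1r; congr (_ - _).
    rewrite /bvec dot_sumr; apply: eq_bigr => j _; by rewrite dotZr.
  have Hs0 : 0 <= \sum_(j < size (S i)) lam i j * lx (inst R d N S i j).
    rewrite Hsum Erho subr_ge0; exact: Hk.
  case: (pickP (fun j : 'I_(size (S i)) => 0 <= lx (inst R d N S i j))) => [j Hj|Hn].
    by exists j; split.
  have Hneg : forall j : 'I_(size (S i)), lx (inst R d N S i j) < 0.
    by move=> j; rewrite ltNge Hn.
  case: (pickP (fun j : 'I_(size (S i)) => 0 < lam i j)) => [k Hkp|Hn2]; last first.
    exfalso; move: lam1; rewrite big1 => [|j _].
      by move/eqP; rewrite eq_sym oner_eq0.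
    apply/eqP; rewrite eq_le lam0 // andbT leNgt Hn2 //.
  exfalso; move: Hs0; rewrite (bigD1 k) //= leNgt => /negP; apply.
  have h1 : lam i k * lx (inst R d N S i k) < 0 by rewrite pmulr_rlt0.
  have h2 : \sum_(j < size (S i) | j != k) lam i j * lx (inst R d N S i j) <= 0.
    apply: sumr_le0 => j _; apply: mulr_ge0_le0; [exact: lam0 | exact: ltW (Hneg j)].
  lra.
have ncond : ~ (exists i : 'I_N, alpha i < C /\
       (forall j, (j < size (S i))%N -> sgn R (lx (inst R d N S i j)) = (-1)%R)).
  move=> [i [aiC Hall]]; have [j [Hj Hl]] := key i aiC.
  by move: (Hall j Hj); rewrite /sgn Hl.
have Elf := Hc2 ncond.
split; first by move=> i; rewrite H8 size_filter count_size.
split.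
  move=> i; rewrite H8 size_filter_gt0; apply/negPn/negP => Hh.
  apply: H6; exists i => j Hj.
  move/hasPn: Hh => Hh; have := Hh _ (mem_nth 0 Hj); rewrite negbK => /eqP.
  by [].
exists alpha; split; first by case: Hqp.
move=> i aiC; have [j [Hj Hl]] := key i aiC.
rewrite H8 size_filter -(count_predC (fun x => sgn R (lf x) != 1) (S i)).
rewrite -{1}[count _ _]addn0 ltn_add2l -has_count; apply/hasP.
exists (inst R d N S i j); first exact: mem_nth.
by rewrite /= negbK /sgn Elf Hl.
Qed.
End Iter.

End Dot.

Lemma ind_count (R : realType) (N : nat) (nu : R) (alpha : 'I_N -> R) :
  0 < nu -> (0 < N)%N -> qp_feasible R ((nu * N%:R)^-1) alpha ->
  (1 - nu) * N%:R <= \sum_i ((alpha i < (nu * N%:R)^-1)%R%:R : R).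
Proof.
move=> nu0 N0 [Hfe Hsum]; set C := (nu * N%:R)^-1.
have N0' : (0 : R) < N%:R by rewrite ltr0n.
have nN : 0 < nu * N%:R by apply: mulr_gt0.
have CnN : C * (nu * N%:R) = 1 by rewrite /C mulVf // gt_eqF.
set s := \sum_i ((~~ (alpha i < C)%R)%:R : R).
have h1 : s * C <= 1.
  rewrite /s mulr_suml -[X in _ <= X]Hsum; apply: ler_sum => i _.
  have /andP[a0 aC] := Hfe i.
  case: ltP => /= H; first by rewrite mul0r.
  by rewrite mul1r.
have h2 : \sum_i ((alpha i < C)%R%:R : R) + s = N%:R.
  rewrite /s -big_split /=.
  under eq_bigr => i _ do (have -> : ((alpha i < C)%R%:R + (~~ (alpha i < C)%R)%:R : R) = 1 by case: (alpha i < C); rewrite /= ?addr0 ?add0r).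
  by rewrite sumr_const card_ord.
have h3 : s <= nu * N%:R.
  have -> : s = (s * C) * (nu * N%:R) by rewrite -mulrA CnN mulr1.
  by rewrite -[X in _ <= X]mul1r ler_wpM2r // ltW.
nra.
Qed.

Lemma alpha_le1 (R : realType) (N : nat) (C : R) (alpha : 'I_N -> R) i :
  qp_feasible R C alpha -> alpha i <= 1.
Proof.
move=> [Hfe Hsum]; rewrite -Hsum (bigD1 i) //= lerDl.
by apply: sumr_ge0 => j _; have /andP[] := Hfe j.
Qed.

Theorem theorem3
  (R : realType) (V : lmodType R) (dot : V -> V -> R)
  (dot_sym : forall u v, dot u v = dot v u)
  (dot_lin : forall (a : R) u v w, dot (a *: u + v) w = a * dot u w + dot v w)
  (dot_pos : forall v, 0 <= dot v v)
  (dot_def : forall v, dot v v = 0 -> v = 0)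
  (d : nat) (Phi : 'rV[R]_d -> V) (nu : R) (hnu : 0 < nu < 1)
  (N : nat) (hN : (0 < N)%N)
  (B : 'I_N -> seq 'rV[R]_d) (hB : forall i, (0 < size (B i))%N)
  (label : 'rV[R]_d -> bool) (m : nat) :
  pmi_queries dot Phi nu label B m ->
  if nu < N%:R^-1 then (m <= min_size B - 1)%N
  else (m%:Z <= Num.ceil ((total_size B)%:R / ((1 - nu) * N%:R)) - 1)%R.
Proof.
move=> [Ss [qs [H0 Hit]]].
have St t := fun ht : (t < m)%N =>
  @iter_step R V dot dot_sym dot_lin d Phi nu N _ _ _ dot_pos (Hit t ht).1.
have /andP[nu0 nu1] := hnu.
have N0' : (0 : R) < N%:R by rewrite ltr0n.
set C := (nu * N%:R)^-1.
have Hlast : (0 < m)%N -> forall i, (0 < size (Ss m i))%N.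
  case: m Hit St => // m' _ St _ i; have [_ [H _]] := St m' (ltnSn _); exact: H.
case: ifP => Hnu.
  have C1 : 1 < C.
    rewrite /C invf_gt1; last exact: mulr_gt0.
    have : nu * N%:R < N%:R^-1 * N%:R by rewrite ltr_pM2r // Hnu.
    by rewrite mulVf // gt_eqF.
  have Hind : forall t, (t <= m)%N -> forall i, (size (Ss t i) + t <= size (B i))%N.
    elim=> [|t IH] ht i; first by rewrite addn0 H0.
    have [_ [_ [alpha [Hf Hlt]]]] := St t ht.
    have := Hlt i (le_lt_trans (@alpha_le1 _ _ _ _ i Hf) C1).
    have := IH (ltnW ht) i; lia.
  case: m Hit St Hind Hlast => [|m] _ _ Hind Hlast; first by [].
  have Hm : forall i, (m.+2 <= size (B i))%N.
    move=> i; have := Hind _ (leqnn _) i; have := Hlast isT i; lia.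
  suff : (m.+1 < min_size B)%N by lia.
  rewrite /min_size; apply: (big_ind (fun x => m.+1 < x)%N) => //.
    rewrite /total_size (bigD1 (Ordinal hN)) //=.
    apply: (leq_trans (Hm _)); exact: leq_addr.
  by move=> x y hx hy; rewrite leq_min hx hy.
have nu1' : 0 < 1 - nu by rewrite subr_gt0.
set r := (1 - nu) * N%:R.
have r0 : 0 < r by apply: mulr_gt0.
have Hind : forall t, (t <= m)%N ->
    ((total_size (Ss t))%:R : R) <= (total_size B)%:R - t%:R * r.
  elim=> [|t IH] ht; first by rewrite mul0r subr0 /total_size; under eq_bigr do rewrite H0.
  have [Hle [_ [alpha [Hf Hlt]]]] := St t ht.
  have Hc := @ind_count _ _ _ _ nu0 hN Hf.
  have Hnat : (total_size (Ss t.+1) + \sum_i (alpha i < C)%R <= total_size (Ss t))%N.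
    rewrite /total_size -big_split /=; apply: leq_sum => i _.
    have := Hle i; case: ltP => h /=; last by rewrite addn0.
    by have := Hlt i h; lia.
  have := IH (ltnW ht).
  move: Hnat; rewrite -(ler_nat R) natrD natr_sum => Hnat.
  rewrite -/C -/r in Hc.
  rewrite -nat1r mulrDl mul1r.
  set S1 := ((total_size (Ss t.+1))%:R : R) in Hnat *.
  set S0 := ((total_size (Ss t))%:R : R) in Hnat *.
  set Q := \sum_i _ in Hnat Hc.
  lra.
case: m Hit St Hind Hlast => [|m] _ _ Hind Hlast.
  have : (0 < Num.ceil ((total_size B)%:R / r))%R.
    rewrite ceil_gt0 divr_gt0 // ltr0n /total_size (bigD1 (Ordinal hN)) //=.
    exact: (leq_trans (hB _) (leq_addr _ _)).
  lia.
have Htot : (1 <= total_size (Ss m.+1))%N.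
  rewrite /total_size (bigD1 (Ordinal hN)) //=.
  exact: (leq_trans (Hlast isT _) (leq_addr _ _)).
have := Hind _ (leqnn _).
rewrite -(ler_nat R) in Htot.
move=> H.
have Hlt : (m.+1%:R : R) < (total_size B)%:R / r.
  rewrite ltr_pdivlMr //; lra.
have : (m.+1%:Z < Num.ceil ((total_size B)%:R / r))%R by rewrite ceil_gt_int.
lia.
Qed.
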